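(* Let $\mathcal E=\widetilde{\Omega^1_D}(\mathcal A)$ be the bimodule of one-forms of a spectral triple $(\mathcal A,\mathcal H,D)$. Then $\mathcal E$ satisfies Assumption III if and only if it satisfies Assumption III$'$.
   Context: $\mathcal E$ is the span in $B(\mathcal H)$ of $a[D,b]$; $\mathcal Z(\mathcal E)=\{e:ea=ae\ \forall a\in\mathcal A\}$, $\mathcal Z(\mathcal A)$ the center of $\mathcal A$. Assumption III: $\mathcal Z(\mathcal E)$ is finitely generated projective over $\mathcal Z(\mathcal A)$ and $\mathcal Z(\mathcal E)\otimes_{\mathcal Z(\mathcal A)}\mathcal A\to\mathcal E$, $e\otimes a\mapsto ea$, is a vector space isomorphism. Assumption III$'$: there exist a unital $*$-subalgebra $\mathcal A'\subseteq\mathcal Z(\mathcal A)$ and an $\mathcal A'$-submodule $\mathcal E'\subseteq\mathcal Z(\mathcal E)$, finitely generated projective over $\mathcal A'$, such that $\mathcal E'\otimes_{\mathcal A'}\mathcal A\to\mathcal E$, $e\otimes a\mapsto ea$, is a vector space isomorphism. *)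

(* Defs.v *)
From HB Require Import structures.
From mathcomp Require Import all_boot all_order all_algebra.
Set Implicit Arguments. Unset Strict Implicit. Unset Printing Implicit Defensive.
Import Order.TTheory GRing.Theory Num.Theory.
Local Open Scope ring_scope.

Section Defs.
Variables (C : numClosedFieldType) (B : algType C).

(* [star] is an involution making B a *-algebra (B plays B(H), star = adjoint) *)
Definition star_axioms (star : B -> B) : Prop :=
  [/\ forall x y, star (x + y) = star x + star y,
      forall (c : C) x, star (c *: x) = c^* *: star x,
      forall x y, star (x * y) = star y * star x
    & forall x, star (star x) = x].

Definition unital_star_subalg (star : B -> B) (S : B -> Prop) : Prop :=
  [/\ S 1,
      forall x y, S x -> S y -> S (x + y),
      forall (c : C) x, S x -> S (c *: x),
      forall x y, S x -> S y -> S (x * y)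
    & forall x, S x -> S (star x)].

(* Spectral triple data: A a unital *-subalgebra of B = B(H), and
   delta = [D, .] : A -> B, a linear derivation with [D,a^*] = -[D,a]^*. *)
Definition spectral_data (star : B -> B) (A : B -> Prop) (delta : B -> B) : Prop :=
  star_axioms star /\ unital_star_subalg star A /\
  [/\ forall a b, A a -> A b -> delta (a + b) = delta a + delta b,
      forall (c : C) a, A a -> delta (c *: a) = c *: delta a,
      forall a b, A a -> A b -> delta (a * b) = a * delta b + delta a * b
    & forall a, A a -> delta (star a) = - star (delta a)].

Definition one_forms (A : B -> Prop) (delta : B -> B) : B -> Prop :=
  fun x => exists n (c : 'I_n -> C) (a b : 'I_n -> B),
    (forall i, A (a i) /\ A (b i)) /\ x = \sum_(i < n) c i *: (a i * delta (b i)).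

Definition centralizer_in (A E : B -> Prop) : B -> Prop :=
  fun e => E e /\ forall a, A a -> e * a = a * e.

Definition center_of (A : B -> Prop) : B -> Prop := centralizer_in A A.

Definition submodule_over (R M : B -> Prop) : Prop :=
  [/\ M 0, forall x y, M x -> M y -> M (x + y)
    & forall x r, M x -> R r -> M (x * r)].

(* M is finitely generated projective over R: M is a direct summand
   (retract) of a free module R^n, i.e. there are R-linear maps
   s : M -> R^n (components s i) and p : R^n -> M, p(x) = sum_i g i * x i,
   with p o s = id_M. *)
Definition fg_projective (R M : B -> Prop) : Prop :=
  exists n (g : 'I_n -> B) (s : 'I_n -> B -> B),
    [/\ forall i, M (g i),
        forall i m, M m -> R (s i m),
        forall i m m', M m -> M m' -> s i (m + m') = s i m + s i m',
        forall i m r, M m -> R r -> s i (m * r) = s i m * r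
      & forall m, M m -> m = \sum_(i < n) g i * s i m].

(* The map M (x)_R N -> E, m (x) n |-> m n, is well defined and bijective.
   M (x)_R N is given by its defining universal property: the pair
   (E, (m,n) |-> m n) is a tensor product of M and N over R, i.e.
   E is spanned by the products m n, and every R-balanced biadditive map
   out of M x N factors through it via an additive map on E. *)
Definition tensor_mult_iso (R M N E : B -> Prop) : Prop :=
  [/\ forall m n, M m -> N n -> E (m * n),
      forall e, E e -> exists k (m n : 'I_k -> B),
        (forall i, M (m i) /\ N (n i)) /\ e = \sum_(i < k) m i * n i
    & forall (G : zmodType) (beta : B -> B -> G),
        (forall m m' n, M m -> M m' -> N n -> beta (m + m') n = beta m n + beta m' n) ->
        (forall m n n', M m -> N n -> N n' -> beta m (n + n') = beta m n + beta m n') ->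
        (forall m r n, M m -> R r -> N n -> beta (m * r) n = beta m (r * n)) ->
        exists f : B -> G,
          (forall x y, E x -> E y -> f (x + y) = f x + f y) /\
          (forall m n, M m -> N n -> f (m * n) = beta m n)].

Definition assumption_III (A E : B -> Prop) : Prop :=
  fg_projective (center_of A) (centralizer_in A E) /\
  tensor_mult_iso (center_of A) (centralizer_in A E) A E.

Definition assumption_III' (star : B -> B) (A E : B -> Prop) : Prop :=
  exists (A' E' : B -> Prop),
    unital_star_subalg star A' /\
    [/\ forall x, A' x -> center_of A x,
        submodule_over A' E', forall x, E' x -> centralizer_in A E x,
        fg_projective A' E'
      & tensor_mult_iso A' E' A E].

End Defs.

(* Main.v *)
Require Import Defs.
From mathcomp Require Import all_boot all_order all_algebra.
Set Implicit Arguments. Unset Strict Implicit. Unset Printing Implicit Defensive.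
Import GRing.Theory.
Local Open Scope ring_scope.

Section Aux.
Variables (C : numClosedFieldType) (B : algType C).

Lemma sum_closedP (P : B -> Prop) : P 0 -> (forall x y, P x -> P y -> P (x + y)) ->
  forall n (F : 'I_n -> B), (forall i, P (F i)) -> P (\sum_(i < n) F i).
Proof. by move=> P0 PD n F HF; apply: big_ind => // i _; apply: HF. Qed.

Lemma sum_morphP (G : zmodType) (P : B -> Prop) (h : B -> G) :
  P 0 -> (forall x y, P x -> P y -> P (x + y)) ->
  (forall x y, P x -> P y -> h (x + y) = h x + h y) ->
  forall n (F : 'I_n -> B), (forall i, P (F i)) ->
  h (\sum_(i < n) F i) = \sum_(i < n) h (F i).
Proof.
move=> P0 PD hD.
have h0 : h 0 = 0.
  have e := hD 0 0 P0 P0; rewrite addr0 in e.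
  have := congr1 (fun z => z - h 0) e; rewrite subrr addrK => ->; done.
elim=> [|n IH] F HF; first by rewrite !big_ord0.
rewrite !big_ord_recr /= hD; first by rewrite IH.
  by apply: sum_closedP.
exact: HF.
Qed.

Lemma one_forms0 A delta : one_forms A delta (0 : B).
Proof.
exists 0%N, (fun _ => 0), (fun _ => 0), (fun _ => 0); split.
  by case.
by rewrite big_ord0.
Qed.

Lemma one_formsD A delta (x y : B) :
  one_forms A delta x -> one_forms A delta y -> one_forms A delta (x + y).
Proof.
move=> [n [c [a [b [Hab ->]]]]] [m [c' [a' [b' [Hab' ->]]]]].
exists (n + m)%N,
  (fun i => match split i with inl j => c j | inr k => c' k end),
  (fun i => match split i with inl j => a j | inr k => a' k end),
  (fun i => match split i with inl j => b j | inr k => b' k end); split.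
  by move=> i; case: (split i).
rewrite big_split_ord /=; congr (_ + _); apply: eq_bigr => i _.
  by have -> : split (lshift m i) = inl i by exact: (unsplitK (inl i)).
by have -> : split (rshift n i) = inr i by exact: (unsplitK (inr i)).
Qed.

End Aux.

Theorem proposition4p17 (C : numClosedFieldType) (B : algType C)
  (star : B -> B) (A : B -> Prop) (delta : B -> B) :
  spectral_data star A delta ->
  (assumption_III A (one_forms A delta) <->
   assumption_III' star A (one_forms A delta)).
Proof.
move=> [[stD stZ stM stK] [[A1 AD AZ AM Ast] _]].
set E := one_forms A delta.
have E0 : E 0 := one_forms0 A delta.
have ED : forall x y, E x -> E y -> E (x + y) := @one_formsD C B A delta.
have A0 : A 0 by have := AZ 0 1 A1; rewrite scale0r.
have ZE0 : centralizer_in A E 0 by split => // a _; rewrite mul0r mulr0.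
have ZED : forall x y, centralizer_in A E x -> centralizer_in A E y ->
    centralizer_in A E (x + y).
  move=> x y [Ex Hx] [Ey Hy]; split; first exact: ED.
  by move=> a Aa; rewrite mulrDl mulrDr Hx // Hy.
split.
- move=> [Hfg [T1 T2 T3]].
  exists (center_of A), (centralizer_in A E); split.
    split.
    + by split => // a _; rewrite mul1r mulr1.
    + move=> x y [Ax Hx] [Ay Hy]; split; first exact: AD.
      by move=> a Aa; rewrite mulrDl mulrDr Hx // Hy.
    + move=> c x [Ax Hx]; split; first exact: AZ.
      by move=> a Aa; rewrite -scalerAl -scalerAr Hx.
    + move=> x y [Ax Hx] [Ay Hy]; split; first exact: AM.
      by move=> a Aa; rewrite -mulrA Hy // mulrA Hx // mulrA.
    + move=> x [Ax Hx]; split; first exact: Ast.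
      move=> a Aa.
      have := congr1 star (Hx (star a) (Ast _ Aa)).
      by rewrite !stM !stK => ->.
  split => //.
  split => //.
  move=> x r [Ex Hx] [Ar Hr]; split; first exact: T1.
  by move=> a Aa; rewrite -mulrA Hr // mulrA Hx // mulrA.
- move=> [A' [E' [[_ _ _ _ _] [A'Z [E'0 E'D E'M] E'Z
    [n [g [s [Hg Hs Hadd Hmul Hdec]]]] [T1 T2 T3]]]]].
  pose bet := fun m a => [ffun i : 'I_n => s i m * a].
  have b1 : forall m m' a, E' m -> E' m' -> A a -> bet (m + m') a = bet m a + bet m' a.
    by move=> m m' a Em Em' Aa; apply/ffunP => i; rewrite !ffunE Hadd // mulrDl.
  have b2 : forall m a a', E' m -> A a -> A a' -> bet m (a + a') = bet m a + bet m a'.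
    by move=> m a a' Em Aa Aa'; apply/ffunP => i; rewrite !ffunE mulrDr.
  have b3 : forall m r a, E' m -> A' r -> A a -> bet (m * r) a = bet m (r * a).
    by move=> m r a Em Ar Aa; apply/ffunP => i; rewrite !ffunE Hmul // mulrA.
  have [f [fD fM]] := T3 _ bet b1 b2 b3.
  set F := fun e i => f e i.
  have Fsum : forall k (F0 : 'I_k -> B), (forall j, E (F0 j)) ->
      f (\sum_(j < k) F0 j) = \sum_(j < k) f (F0 j).
    by move=> k F0 HF; apply: (sum_morphP E0 ED fD).
  have Fdec : forall k (m a : 'I_k -> B), (forall j, E' (m j) /\ A (a j)) ->
      forall i, F (\sum_(j < k) m j * a j) i = \sum_(j < k) s i (m j) * a j.
    move=> k m a Hma i; rewrite /F Fsum; last first.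
      by move=> j; case: (Hma j) => ? ?; apply: T1.
    rewrite sum_ffunE; apply: eq_bigr => j _.
    by case: (Hma j) => ? ?; rewrite fM // /bet ffunE.
  have AsumP := sum_closedP A0 AD.
  have FA : forall e i, E e -> A (F e i).
    move=> e i /T2 [k [m [a [Hma ->]]]]; rewrite Fdec //.
    apply: AsumP => j; case: (Hma j) => Em Aa; apply: AM => //.
    by case: (A'Z _ (Hs i _ Em)).
  have Eright : forall e a, E e -> A a -> E (e * a).
    move=> e a /T2 [k [m [b [Hma ->]]]] Aa; rewrite mulr_suml.
    apply: (sum_closedP E0 ED) => j; rewrite -mulrA.
    by case: (Hma j) => ? ?; apply: T1 => //; apply: AM.
  have Fr : forall e a i, E e -> A a -> F (e * a) i = F e i * a.
    move=> e a i /T2 [k [m [b [Hma ->]]]] Aa; rewrite mulr_suml.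
    under eq_bigr do rewrite -mulrA.
    rewrite !Fdec //; last by move=> j; case: (Hma j) => ? ?; split=> //; apply: AM.
    by rewrite mulr_suml; apply: eq_bigr => j _; rewrite mulrA.
  have Fl : forall e a i, E e -> A a -> F (a * e) i = a * F e i.
    move=> e a i /T2 [k [m [b [Hma ->]]]] Aa; rewrite mulr_sumr.
    have -> : \sum_(j < k) a * (m j * b j) = \sum_(j < k) m j * (a * b j).
      apply: eq_bigr => j _; case: (Hma j) => Em _.
      by case: (E'Z _ Em) => _ Hc; rewrite mulrA -Hc // mulrA.
    rewrite !Fdec //; last by move=> j; case: (Hma j) => ? ?; split=> //; apply: AM.
    rewrite mulr_sumr; apply: eq_bigr => j _; case: (Hma j) => Em _.
    case: (A'Z _ (Hs i _ Em)) => _ Hc.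
    by rewrite !mulrA Hc.
  have Frec : forall e, E e -> e = \sum_(i < n) g i * F e i.
    move=> e /T2 [k [m [b [Hma ->]]]].
    under [RHS]eq_bigr do rewrite Fdec // mulr_sumr.
    rewrite exchange_big /=; apply: eq_bigr => j _.
    case: (Hma j) => Em _; rewrite {1}(Hdec _ Em) mulr_suml.
    by apply: eq_bigr => i _; rewrite mulrA.
  have FZ : forall e i, centralizer_in A E e -> center_of A (F e i).
    move=> e i [Ee He]; split; first exact: FA.
    by move=> a Aa; rewrite -Fr // -Fl // He.
  have gZ : forall i, centralizer_in A E (g i) by move=> i; apply: E'Z.
  split.
    exists n, g, (fun i e => F e i); split.
    + by [].
    + by move=> i m Zm; apply: FZ.
    + by move=> i m m' [Em _] [Em' _]; rewrite /F fD // ffunE.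
    + by move=> i m r [Em _] [Ar _]; rewrite Fr.
    + by move=> m [Em _]; apply: Frec.
  split.
  + by move=> m a [Em _] Aa; apply: Eright.
  + move=> e /T2 [k [m [a [Hma ->]]]]; exists k, m, a; split => //.
    by move=> j; case: (Hma j) => ? ?; split => //; apply: E'Z.
  + move=> G beta bD1 bD2 bM.
    have c1 : forall m m' a, E' m -> E' m' -> A a -> beta (m + m') a = beta m a + beta m' a.
      by move=> m m' a ? ? ?; apply: bD1 => //; apply: E'Z.
    have c2 : forall m a a', E' m -> A a -> A a' -> beta m (a + a') = beta m a + beta m a'.
      by move=> m a a' ? ? ?; apply: bD2 => //; apply: E'Z.
    have c3 : forall m r a, E' m -> A' r -> A a -> beta (m * r) a = beta m (r * a).
      by move=> m r a ? ? ?; apply: bM => //; [apply: E'Z | apply: A'Z].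
    have [h [hD hM]] := T3 G beta c1 c2 c3.
    exists h; split => // m a Zm Aa.
    have Em : E m by case: Zm.
    have termZ : forall i, centralizer_in A E (g i * F m i).
      move=> i; case: (FZ m i Zm) => AF HF; case: (gZ i) => _ Hg'; split.
        by apply: T1.
      by move=> b Ab; rewrite -mulrA HF // mulrA Hg' // mulrA.
    rewrite {1 2}(Frec m Em).
    rewrite (sum_morphP (h := fun x => beta x a) ZE0 ZED) //; last first.
      by move=> x y Zx Zy; apply: bD1.
    rewrite mulr_suml (sum_morphP E0 ED hD); last first.
      by move=> i; case: (termZ i) => ? _; apply: Eright.
    apply: eq_bigr => i _.
    rewrite bM //; last exact: FZ.
    by rewrite -mulrA hM //; apply: AM => //; apply: FA.
Qed.
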